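(* Let $f:[0,1)\to\mathbb{R}$ be a function such that for every positive integer $n$, every real $t\in[0,n)$ and every $p\in[0,1]$, \[ \mathbb{E}\big[\exp(t\cdot V_{n,2,(p,1-p)})\big]\leq f(t/n). \] Let $k\geq 2$ be an integer, $n$ a positive integer, and $P=(p_1,\dots,p_k)$ a probability distribution on a set of size $k$. Then for all $0\leq t<n$, \[ \mathbb{E}\big[\exp(t\cdot V_{n,k,P})\big]\leq f(t/n)^{k-1}. \]
   Context: For a positive integer $n$, an integer $k\geq 2$ and a probability distribution $P=(p_1,\dots,p_k)$ on $\{1,\dots,k\}$, let $X=(X_1,\dots,X_k)$ be multinomially distributed with $n$ samples and probabilities $P$, and define $V_{n,k,P}=D\big((X_1/n,\dots,X_k/n)\,\|\,(p_1,\dots,p_k)\big)$, where $D\big((q_i)_i\,\|\,(p_i)_i\big)=\sum_i q_i\log\frac{q_i}{p_i}$ is the Kullback--Leibler divergence (natural logarithm, convention $0\log(0/p)=0$). In particular $V_{n,2,(p,1-p)}=D\big((B/n,1-B/n)\,\|\,(p,1-p)\big)$ with $B\sim\mathrm{Binom}(n,p)$. *)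

(* Defs.v *)
From mathcomp Require Import all_boot all_order all_algebra.
From mathcomp Require Import all_classical all_reals all_analysis.
Set Implicit Arguments. Unset Strict Implicit. Unset Printing Implicit Defensive.
Import Order.TTheory GRing.Theory Num.Theory.
Local Open Scope ring_scope.

Definition KL (R : realType) (k : nat) (q p : 'I_k -> R) : R :=
  \sum_(i < k) (if q i == 0 then 0 else q i * ln (q i / p i)).

(* n i.i.d. samples from P are a function s : 'I_n -> 'I_k, with probability
   prod_j P (s j); the multinomial vector is X_i = #{j | s j = i}. *)
Definition counts (n k : nat) (s : {ffun 'I_n -> 'I_k}) (i : 'I_k) : nat :=
  #|[set j | s j == i]|.

Definition sample_prob (R : realType) (n k : nat) (P : 'I_k -> R)
  (s : {ffun 'I_n -> 'I_k}) : R := \prod_(j < n) P (s j).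

Definition V (R : realType) (n k : nat) (P : 'I_k -> R)
  (s : {ffun 'I_n -> 'I_k}) : R :=
  KL (fun i => (counts s i)%:R / n%:R) P.

Definition mgf_V (R : realType) (n k : nat) (P : 'I_k -> R) (t : R) : R :=
  \sum_(s : {ffun 'I_n -> 'I_k}) sample_prob P s * expR (t * V P s).

Definition binP (R : realType) (p : R) : 'I_2 -> R :=
  fun i => if i == ord0 then p else 1 - p.

Definition is_distr (R : realType) (k : nat) (P : 'I_k -> R) : Prop :=
  (forall i, 0 <= P i) /\ \sum_(i < k) P i = 1.

(* Main.v *)
Require Import Defs.
From mathcomp Require Import all_boot all_order all_algebra.
From mathcomp Require Import all_classical all_reals all_analysis.
From mathcomp Require Import ring lra.
Import Order.TTheory GRing.Theory Num.Theory.
Local Open Scope ring_scope.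
Set Warnings "-notation-overridden,-ambiguous-paths,-notation-incompatible-prefix".

Lemma sum_ind (R : realType) (T : finType) (x : T) (F : T -> R) :
  \sum_(y : T) ((x == y)%:R * F y) = F x.
Proof.
rewrite (bigD1 x) //= eqxx mul1r big1 ?addr0 // => y /negbTE.
by rewrite eq_sym => ->; rewrite mul0r.
Qed.

Lemma prod_ind (R : realType) (T : finType) (b : T -> bool) :
  \prod_(j : T) ((b j)%:R : R) = ([forall j, b j])%:R.
Proof.
case: forallP => H.
  by rewrite big1 // => j _; rewrite H.
have [j /negbTE Hj] : exists j, ~~ b j.
  by apply/existsP; rewrite -negb_forall; apply/negP => /forallP.
by rewrite (bigD1 j) //= Hj mul0r.
Qed.

Lemma transfer (R : realType) (J : finType) (k : nat) (B : {set J}) (Q : 'I_k -> R)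
  (H : ('I_k -> nat) -> R) (hQ : \sum_i Q i = 1) :
  \sum_(r : {ffun J -> 'I_k}) (\prod_j Q (r j)) * H (fun i => #|[set j in B | r j == i]|)
  = \sum_(r' : {ffun 'I_#|B| -> 'I_k}) (\prod_x Q (r' x)) * H (counts r').
Proof.
pose phi : 'I_#|B| -> J := enum_val.
have phiB x : phi x \in B by apply: enum_valP.
have phi_inj : injective phi by apply: enum_val_inj.
have imB j : (j \in B) = (j \in [set phi x | x in 'I_#|B|]).
  apply/idP/imsetP => [jB|[x _ ->]]; last exact: phiB.
  by exists (enum_rank_in jB j) => //; rewrite /phi enum_rankK_in.
pose res (r : {ffun J -> 'I_k}) : {ffun 'I_#|B| -> 'I_k} := [ffun x => r (phi x)].
have cntE (r : {ffun J -> 'I_k}) : (fun i => #|[set j in B | r j == i]|) = counts (res r).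
  apply: funext => i; rewrite /counts.
  have -> : [set j in B | r j == i] = phi @: [set x | res r x == i].
    apply/setP => j; rewrite inE imB; apply/andP/imsetP.
      by move=> [/imsetP [x _ ->] Hr]; exists x => //; rewrite inE ffunE.
    by move=> [x]; rewrite inE ffunE => Hx ->; split => //; rewrite -imB; apply: phiB.
  by rewrite card_imset.
pose psi (j : J) := [pick x | phi x == j].
have psi_phi x : psi (phi x) = Some x.
  rewrite /psi; case: pickP => [y /eqP /phi_inj -> //|].
  by move/(_ x); rewrite eqxx.
have psi_nB j : j \notin B -> psi j = None.
  rewrite /psi; case: pickP => [y /eqP <- | //].
  by rewrite phiB.
have prod_psi (F : 'I_#|B| -> R) :
    \prod_j (if psi j is Some x then F x else 1) = \prod_x F x.
  rewrite (bigID (mem B)) /= [X in _ * X]big1 ?mulr1; last first.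
    by move=> j jB; rewrite psi_nB.
  rewrite (eq_bigl (mem [set phi x | x in 'I_#|B|])); last by move=> j; rewrite /= imB.
  rewrite big_imset /=; last by move=> x y _ _; apply: phi_inj.
  by apply: eq_big => // x; rewrite psi_phi.
under eq_bigr => r _ do rewrite cntE.
under eq_bigr => r _ do rewrite -(@sum_ind _ _ (res r) (fun r' => (\prod_j Q (r j)) * H (counts r'))).
rewrite exchange_big /=; apply: eq_bigr => r' _.
under eq_bigr => r _ do rewrite mulrA.
rewrite -big_distrl /=; congr (_ * _).
pose E j i := (if psi j is Some x then (r' x == i)%:R else 1) * Q i.
have -> : \prod_x Q (r' x) = \prod_j \sum_i E j i.
  rewrite -prod_psi; apply: eq_bigr => j _; rewrite /E.
  case: (psi j) => [x|]; last by under eq_bigr do rewrite mul1r.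
  by rewrite sum_ind.
rewrite bigA_distr_bigA /=; apply: eq_bigr => r _.
rewrite /E big_split /=; congr (_ * _).
have -> : \prod_j (if psi j is Some x then ((r' x == r j)%:R : R) else 1)
        = \prod_x ((r' x == r (phi x))%:R : R).
  rewrite -prod_psi; apply: eq_bigr => j _.
  case Ep: (psi j) => [x|] //; move: Ep; rewrite /psi.
  by case: pickP => // y /eqP <- [->].
rewrite prod_ind.
have -> : [forall x, r' x == r (phi x)] = (res r == r').
  apply/forallP/eqP => [Hx|<- x]; last by rewrite ffunE.
  by apply/ffunP => x; rewrite ffunE; apply/esym/eqP/Hx.
by [].
Qed.

Lemma sum2 (R : realType) (F : 'I_2 -> R) : \sum_i F i = F ord0 + F (lift ord0 ord0).
Proof. by rewrite !big_ord_recl big_ord0 addr0. Qed.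

Lemma lift00_neq : (lift ord0 (ord0 : 'I_1) == (ord0 : 'I_2)) = false.
Proof. by []. Qed.

Lemma ord2_lift (b : 'I_2) : (b == lift ord0 ord0) = (b != ord0).
Proof. by case: b => [[|[|m]]]. Qed.

Lemma binP0 (R : realType) (p : R) : binP p ord0 = p.
Proof. by rewrite /binP eqxx. Qed.

Lemma binP1 (R : realType) (p : R) : binP p (lift ord0 ord0) = 1 - p.
Proof. by []. Qed.

Definition joinpt {k : nat} (b : 'I_2) (r : 'I_k.+1) : 'I_k.+2 :=
  if b == ord0 then ord0 else lift ord0 r.

Definition join {n k : nat} (b : {ffun 'I_n -> 'I_2}) (r : {ffun 'I_n -> 'I_k.+1})
  : {ffun 'I_n -> 'I_k.+2} := [ffun j => joinpt (b j) (r j)].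

Lemma joinpt_eq0 k (b : 'I_2) (r : 'I_k.+1) : (joinpt b r == ord0) = (b == ord0).
Proof.
rewrite /joinpt; case: (b =P ord0) => [_|_]; first by rewrite eqxx.
by rewrite eq_sym (negbTE (neq_lift _ _)).
Qed.

Lemma joinpt_eqL k (b : 'I_2) (r i : 'I_k.+1) :
  (joinpt b r == lift ord0 i) = (b != ord0) && (r == i).
Proof.
rewrite /joinpt; case: (b =P ord0) => [_|_] /=.
  by rewrite (negbTE (neq_lift _ _)).
by rewrite (inj_eq lift_inj).
Qed.

Lemma mgf_point (R : realType) (n k : nat) (P : 'I_k -> R) (i0 : 'I_k) (t : R) :
  (0 < n)%N -> (forall i, P i = (i == i0)%:R) -> mgf_V n P t = 1.
Proof.
move=> hn hP; rewrite /mgf_V.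
pose s0 : {ffun 'I_n -> 'I_k} := [ffun => i0].
have -> : \sum_(s : {ffun 'I_n -> 'I_k}) sample_prob P s * expR (t * V P s)
        = \sum_(s : {ffun 'I_n -> 'I_k}) (s0 == s)%:R * expR (t * V P s).
  apply: eq_bigr => s _; congr (_ * _); rewrite /sample_prob.
  under eq_bigr do rewrite hP.
  rewrite prod_ind.
  have -> : [forall j, s j == i0] = (s0 == s).
    apply/forallP/eqP => [H|<- j]; last by rewrite ffunE.
    by apply/ffunP => j; rewrite ffunE; apply/esym/eqP/H.
  by [].
rewrite sum_ind /V /KL big1 ?mulr0 ?expR0 // => i _.
rewrite /counts; case: (eqVneq i i0) => [->|ne].
  have -> : [set j | s0 j == i0] = [set: 'I_n] by apply/setP => j; rewrite !inE ffunE eqxx.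
  rewrite cardsT card_ord divff ?pnatr_eq0 -?lt0n // oner_eq0 hP eqxx divr1 ln1.
  by rewrite mulr0.
have -> : #|[set j | s0 j == i]| = 0%N.
  by apply: eq_card0 => j; rewrite !inE ffunE eq_sym (negbTE ne).
by rewrite mul0r eqxx.
Qed.

Lemma decomp (R : realType) (n k : nat) (P : 'I_k.+2 -> R) (P' : 'I_k.+1 -> R)
  (G : {ffun 'I_n -> 'I_k.+2} -> R) :
  (forall i, P (lift ord0 i) = (1 - P ord0) * P' i) -> \sum_i P' i = 1 ->
  \sum_(s : {ffun 'I_n -> 'I_k.+2}) (\prod_j P (s j)) * G s =
  \sum_(b : {ffun 'I_n -> 'I_2}) \sum_(r : {ffun 'I_n -> 'I_k.+1}) ((\prod_j binP (P ord0) (b j)) * (\prod_j P' (r j))) * G (join b r).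
Proof.
move=> hP' hs; symmetry.
pose W (b : {ffun 'I_n -> 'I_2}) (r : {ffun 'I_n -> 'I_k.+1}) :=
  (\prod_j binP (P ord0) (b j)) * (\prod_j P' (r j)).
rewrite (eq_bigr (fun b => \sum_(r : {ffun 'I_n -> 'I_k.+1})
     \sum_(s : {ffun 'I_n -> 'I_k.+2}) (join b r == s)%:R * (W b r * G s))); last first.
  by move=> b _; apply: eq_bigr => r _; rewrite sum_ind.
under eq_bigr => b _ do rewrite exchange_big.
rewrite exchange_big; apply: eq_bigr => s _.
under eq_bigr do under eq_bigr do rewrite mulrA.
under eq_bigr do rewrite -big_distrl.
rewrite -big_distrl /=; congr (_ * _).
have pt (sg : 'I_k.+2) : P sg = \sum_(be : 'I_2) \sum_rho
    ((joinpt be rho == sg)%:R * (binP (P ord0) be * P' rho)).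
  rewrite sum2 binP0 binP1.
  case: (unliftP ord0 sg) => [i ->|->].
    rewrite big1 ?add0r => [|rho _]; last first.
      by rewrite joinpt_eqL eqxx /= mul0r.
    under eq_bigr => rho _ do rewrite joinpt_eqL lift00_neq /= eq_sym.
    by rewrite sum_ind hP'.
  rewrite [X in _ + X]big1 ?addr0 => [|rho _]; last first.
    by rewrite joinpt_eq0 lift00_neq mul0r.
  under eq_bigr => rho _ do rewrite joinpt_eq0 eqxx mul1r.
  by rewrite -big_distrr /= hs mulr1.
under [RHS]eq_bigr => j _ do rewrite pt.
rewrite bigA_distr_bigA /=; apply: eq_bigr => b _.
rewrite bigA_distr_bigA /=; apply: eq_bigr => r _.
rewrite !big_split /= /W; congr (_ * _).
rewrite prod_ind.
have -> : [forall j, joinpt (b j) (r j) == s j] = (join b r == s).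
  apply/forallP/eqP => [H|<- j]; last by rewrite ffunE.
  by apply/ffunP => j; rewrite ffunE; apply/eqP/H.
by [].
Qed.

Lemma card_sum_split (n k : nat) (C : {set 'I_n}) (r : {ffun 'I_n -> 'I_k}) :
  (\sum_(i < k) #|[set j in C | r j == i]|)%N = #|C|.
Proof.
rewrite -sum1_card (partition_big (fun j => r j) predT) //=.
by apply: eq_bigr => i _; rewrite -sum1_card; apply: eq_bigl => j; rewrite !inE.
Qed.

Lemma chain (R : realType) (n k : nat) (P : 'I_k.+2 -> R) (P' : 'I_k.+1 -> R)
  (b : {ffun 'I_n -> 'I_2}) (r : {ffun 'I_n -> 'I_k.+1}) :
  (0 < n)%N ->
  (forall i, P (lift ord0 i) = (1 - P ord0) * P' i) ->
  (forall j, b j != ord0 -> 0 < 1 - P ord0 /\ 0 < P' (r j)) ->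
  V P (join b r) = V (binP (P ord0)) b +
    (#|[set j | b j != ord0]|%:R / n%:R) *
    KL (fun i => #|[set j in [set j | b j != ord0] | r j == i]|%:R
                   / #|[set j | b j != ord0]|%:R) P'.
Proof.
move=> hn hP' hpos.
set C := [set j | b j != ord0].
set c := #|C|.
set p0 := P ord0.
have nR : (n%:R : R) != 0 by rewrite pnatr_eq0 -lt0n.
have cnt0 : counts (join b r) ord0 = counts b ord0.
  by rewrite /counts; apply: eq_card => j; rewrite !inE ffunE joinpt_eq0.
have cntL i : counts (join b r) (lift ord0 i) = #|[set j in C | r j == i]|.
  by rewrite /counts; apply: eq_card => j; rewrite !inE ffunE joinpt_eqL.
have cnt1 : counts b (lift ord0 ord0) = c.
  by rewrite /counts; apply: eq_card => j; rewrite !inE ord2_lift.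
have sumc := @card_sum_split _ _ C r.
rewrite /V /KL big_ord_recl sum2 cnt0 binP0 cnt1 binP1 -addrA; congr (_ + _).
under eq_bigr => i _ do rewrite cntL.
case: (posnP c) => [c0|cpos].
  have ci0 i : #|[set j in C | r j == i]| = 0%N.
    apply/eqP; rewrite -leqn0 -c0; apply: subset_leq_card.
    by apply/fintype.subsetP => j; rewrite inE => /andP[].
  rewrite big1 => [|i _]; last by rewrite ci0 mul0r eqxx.
  by rewrite c0 mul0r eqxx mul0r addr0.
have [j0 j0C] : exists j0, j0 \in C by apply/card_gt0P.
have hp0 : 0 < 1 - p0 by move: j0C; rewrite inE => /hpos [].
have cR : (c%:R : R) != 0 by rewrite pnatr_eq0 -lt0n.
have cnpos : 0 < (c%:R : R) / n%:R by rewrite divr_gt0 // ltr0n.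
set L := ln (c%:R / n%:R / (1 - p0)).
case: ifPn => [/eqP H|_]; first by move: cnpos; rewrite H ltxx.
have per i : (if (#|[set j in C | r j == i]|%:R : R) / n%:R == 0 then (0 : R)
     else #|[set j in C | r j == i]|%:R / n%:R *
          ln (#|[set j in C | r j == i]|%:R / n%:R / P (lift ord0 i)))
   = (c%:R : R) / n%:R * (if (#|[set j in C | r j == i]|%:R : R) / c%:R == 0 then (0 : R)
     else #|[set j in C | r j == i]|%:R / c%:R *
          ln (#|[set j in C | r j == i]|%:R / c%:R / P' i))
     + #|[set j in C | r j == i]|%:R / n%:R * L.
  set m := #|[set j in C | r j == i]|.
  case: (posnP m) => [z|mpos].
    by rewrite z !mul0r !eqxx /= mulr0 addr0.
  have [j1] : exists j1, j1 \in [set j in C | r j == i] by apply/card_gt0P.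
  rewrite !inE => /andP [j1C /eqP rj1].
  have hP'i : 0 < P' i by case: (hpos j1) => //; rewrite -rj1.
  have mn : 0 < (m%:R : R) / n%:R by rewrite divr_gt0 // ltr0n.
  have mc : 0 < (m%:R : R) / c%:R by rewrite divr_gt0 // ltr0n.
  case: ifPn => [/eqP H|_]; first by move: mn; rewrite H ltxx.
  case: ifPn => [/eqP H|_]; first by move: mc; rewrite H ltxx.
  rewrite hP'.
  have -> : ln (m%:R / n%:R / ((1 - p0) * P' i)) = ln (m%:R / c%:R / P' i) + L.
    rewrite /L -lnM ?posrE ?divr_gt0 ?ltr0n //; f_equal.
    field; apply/and4P; split => //; by rewrite lt0r_neq0.
  field; apply/andP; split => //.
have sumR : \sum_(i < k.+1) (#|[set j in C | r j == i]|%:R : R) = c%:R.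
  by rewrite -natr_sum sumc.
rewrite (eq_bigr _ (fun i _ => per i)) big_split /= -big_distrr /=.
rewrite -big_distrl -big_distrl /= sumR addrC.
by [].
Qed.

Lemma binP_ge0 (R : realType) (p : R) i : 0 <= p -> p <= 1 -> 0 <= binP p i.
Proof. by move=> h0 h1; rewrite /binP; case: ifP => _; rewrite ?subr_ge0. Qed.

Lemma main (R : realType) (f : R -> R)
  (hf : forall (n : nat) (t p : R), (0 < n)%N -> 0 <= t -> t < n%:R ->
          0 <= p -> p <= 1 -> mgf_V n (binP p) t <= f (t / n%:R))
  (f1 : forall (n : nat) (t : R), (0 < n)%N -> 0 <= t -> t < n%:R -> 1 <= f (t / n%:R))
  (k : nat) : forall (n : nat) (P : 'I_k.+1 -> R) (t : R), (0 < n)%N -> is_distr P ->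
     0 <= t -> t < n%:R -> mgf_V n P t <= f (t / n%:R) ^+ k.
Proof.
elim: k => [|k IH] n P t hn [hP0 hP1] ht0 htn.
  rewrite expr0 (@mgf_point _ _ _ P ord0) // => i.
  by rewrite (ord1 i) eqxx -hP1 big_ord1.
have nR : (n%:R : R) != 0 by rewrite pnatr_eq0 -lt0n.
set p0 := P ord0.
have hsum : p0 + \sum_(i < k.+1) P (lift ord0 i) = 1 by rewrite -big_ord_recl.
have hrest0 : 0 <= \sum_(i < k.+1) P (lift ord0 i) by apply: sumr_ge0.
have p0ge0 : 0 <= p0 := hP0 ord0.
have p0le1 : p0 <= 1 by rewrite -hsum lerDl.
pose P' (i : 'I_k.+1) := if p0 == 1 then (i == ord0)%:R else P (lift ord0 i) / (1 - p0).
have hP' : forall i, P (lift ord0 i) = (1 - p0) * P' i.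
  move=> i; rewrite /P'; case: eqP => [e|ne].
    rewrite e subrr mul0r.
    apply: (psumr_eq0P (P := predT) (F := fun i => P (lift ord0 i))) => //.
    by move: hsum; rewrite e; lra.
  by rewrite mulrC divfK // subr_eq0 eq_sym; apply/eqP.
have P'0 : forall i, 0 <= P' i.
  move=> i; rewrite /P'; case: eqP => _; first by rewrite ler0n.
  by rewrite divr_ge0 // subr_ge0.
have P'1 : \sum_i P' i = 1.
  rewrite /P'; case: eqP => [_|ne].
    by rewrite (bigD1 ord0) //= ?eqxx big1 ?addr0 // => i /negbTE ->.
  rewrite -big_distrl /=.
  have -> : \sum_(i < k.+1) P (lift ord0 i) = 1 - p0 by move: hsum; lra.
  by rewrite divff // subr_eq0 eq_sym; apply/eqP.
rewrite /mgf_V /sample_prob.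
rewrite (@decomp R n k P P' (fun s => expR (t * V P s)) hP' P'1).
pose Wb (b : {ffun 'I_n -> 'I_2}) := \prod_j binP p0 (b j).
pose Wr (r : {ffun 'I_n -> 'I_k.+1}) := \prod_j P' (r j).
have Wb0 b : 0 <= Wb b by apply: prodr_ge0 => j _; apply: binP_ge0.
rewrite (eq_bigr (fun b => Wb b * expR (t * V (binP p0) b) *
   \sum_(r : {ffun 'I_n -> 'I_k.+1}) (Wr r * expR ((t * (#|[set j | b j != ord0]|%:R / n%:R)) *
    KL (fun i => #|[set j in [set j | b j != ord0] | r j == i]|%:R
                   / #|[set j | b j != ord0]|%:R) P')))); last first.
  move=> b _; rewrite big_distrr; apply: eq_bigr => r _ /=.
  rewrite -/p0 -/(Wb b) -/(Wr r).
  have [Wbz|Wbn] := eqVneq (Wb b) 0.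
    by rewrite Wbz !mul0r.
  have [Wrz|Wrn] := eqVneq (Wr r) 0.
    by rewrite Wrz mulr0 !mul0r mulr0.
  rewrite (@chain R n k P P' b r) //; last first.
    move=> j bj.
    have Bn : binP p0 (b j) != 0.
      by apply: contra Wbn => /eqP H; apply/prodf_eq0; exists j => //; rewrite H.
    have Pn : P' (r j) != 0.
      by apply: contra Wrn => /eqP H; apply/prodf_eq0; exists j => //; rewrite H.
    rewrite -ord2_lift in bj; rewrite (eqP bj) binP1 in Bn.
    by split; rewrite lt0r ?Bn ?Pn /= ?subr_ge0 ?P'0.
  rewrite mulrDr expRD (mulrA t) /Wb /Wr.
  ring.
have fge1 := f1 n t hn ht0 htn.
have fk0 : 0 <= f (t / n%:R) ^+ k by rewrite exprn_ge0 // (le_trans ler01).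
apply: (le_trans (y := \sum_(b : {ffun 'I_n -> 'I_2})
   (Wb b * expR (t * V (binP p0) b)) * f (t / n%:R) ^+ k)).
  apply: ler_sum => b _; apply: ler_wpM2l.
    by rewrite mulr_ge0 // expR_ge0.
  case: (posnP #|[set j | b j != ord0]|) => [c0|cpos].
    rewrite c0 !mul0r mulr0.
    under eq_bigr do rewrite mul0r expR0 mulr1.
    have -> : \sum_(r : {ffun 'I_n -> 'I_k.+1}) Wr r = \prod_(j < n) \sum_i P' i.
      by rewrite bigA_distr_bigA.
    by rewrite big1 // exprn_ege1.
  set C := [set j | b j != ord0].
  set c := #|C|.
  have cR : (c%:R : R) != 0 by rewrite pnatr_eq0 -lt0n.
  have E := @transfer R _ _ C P' (fun cnt => expR ((t * (c%:R / n%:R)) *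
        KL (fun i => (cnt i)%:R / c%:R) P')) P'1.
  cbv beta in E; rewrite /Wr E.
  have cnpos : 0 < (c%:R : R) / n%:R by rewrite divr_gt0 // ltr0n.
  have := IH c P' (t * (c%:R / n%:R)) cpos (conj P'0 P'1).
  have -> : t * (c%:R / n%:R) / c%:R = t / n%:R by field; apply/andP.
  apply.
    by rewrite mulr_ge0 // ltW.
  apply: (lt_le_trans (y := n%:R * (c%:R / n%:R))).
    by rewrite ltr_pM2r.
  by rewrite mulrC divfK.
rewrite -big_distrl /= exprS.
apply: ler_wpM2r => //.
by have := hf n t p0 hn ht0 htn p0ge0 p0le1.
Qed.

Theorem proposition2p3 (R : realType) (f : R -> R)
  (hf : forall (n : nat) (t p : R), (0 < n)%N -> 0 <= t -> t < n%:R ->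
          0 <= p -> p <= 1 ->
          mgf_V n (binP p) t <= f (t / n%:R))
  (k n : nat) (P : 'I_k -> R) (hk : (2 <= k)%N) (hn : (0 < n)%N)
  (hP : is_distr P) (t : R) (ht0 : 0 <= t) (htn : t < n%:R) :
  mgf_V n P t <= f (t / n%:R) ^+ (k - 1).
Proof.
have f1 : forall (n : nat) (t : R), (0 < n)%N -> 0 <= t -> t < n%:R -> 1 <= f (t / n%:R).
  move=> m s hm hs0 hsm.
  have := hf m s 0 hm hs0 hsm (lexx 0) ler01.
  rewrite (@mgf_point _ _ _ _ (lift ord0 ord0)) // => i.
  by rewrite /binP subr0; case: i => [[|[|m']]] //.
case: k P hk hP => [|k] P hk hP //.
rewrite subn1 /=.
exact: (@main R f hf f1 k n P t hn hP ht0 htn).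
Qed.
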